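(* For any $t\in \mathbb{T}_n$ let $\hat{t}$ be its $(n\times n)$-matrix format, and let $J_n$ denote the $(n\times n)$ exchange matrix (the matrix whose entries are $1$ on the antidiagonal and $0$ everywhere else). Then $\hat{t}\, J_n$ is an uncurling metric of $\mathbb{T}_n$. Conversely, each member of the anti-rotor associated with $\mathbb{T}_n$ can be expressed as $\hat{t}\, J_n$ for some $t\in \mathbb{T}_n$.
   Context: An algebra means a real unital associative algebra with vector space of elements $\mathbb{R}^n$ (standard topology, standard basis, elements as column vectors). $\mathbb{T}_n$ is the $n$-dimensional algebra (under the usual matrix product) of real upper triangular Toeplitz $(n\times n)$-matrices; $s=(x_1,\dots,x_n)\in\mathbb{T}_n$ denotes the upper triangular Toeplitz matrix whose successive diagonals, starting with the main diagonal and moving right, have the constant values $x_1,\dots,x_n$. For an $n$-dimensional algebra $A$ with elements $s=(x_1,\dots,x_n)$ in an open ball of units centered at the identity $\mathbf{1}_A$, an uncurling metric is a real symmetric $(n\times n)$-matrix $L$ with $d\big((s^{-1})^T L\, \mathbf{d}s\big)=0$ on that ball, where $\mathbf{d}s=(dx_1,\dots,dx_n)^T$ and $d$ is the exterior derivative; the anti-rotor of $A$ is the real vector space of all uncurling metrics. *)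

(* Defs.v *)
From HB Require Import structures.
From mathcomp Require Import all_boot all_order all_algebra.
From mathcomp Require Import all_classical all_reals all_analysis.
Set Implicit Arguments. Unset Strict Implicit. Unset Printing Implicit Defensive.
Import Order.TTheory GRing.Theory Num.Theory.
Local Open Scope ring_scope.

Section TToep.
Variables (R : realType) (n : nat).

(* The element s = (x_1,...,x_n) of T_n is the column vector s : 'cV_n,
   with x_{k+1} = s k 0 (0-based indices). *)

(* matrix format \hat s : upper triangular Toeplitz matrix whose k-th
   superdiagonal (k = j - i) is constantly s k 0 *)
Definition toep (s : 'cV[R]_n) : 'M[R]_n :=
  \matrix_(i, j) (if (i <= j)%N then \sum_(k : 'I_n | val k == (j - i)%N) s k 0 else 0).

Definition exch : 'M[R]_n :=
  \matrix_(i, j) (if (val i + val j == n.-1)%N then 1 else 0).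

Definition oneT : 'cV[R]_n := \col_i (if val i == 0%N then 1 else 0).

(* s is a unit of the algebra T_n (product of T_n = matrix product of formats) *)
Definition unitT (s : 'cV[R]_n) : Prop :=
  exists u : 'cV[R]_n, toep s *m toep u = 1%:M /\ toep u *m toep s = 1%:M.

(* s^{-1}: the element whose matrix format is the inverse of \hat s, i.e. the
   first row of invmx (toep s) (read as a column vector) *)
Definition tinv (s : 'cV[R]_n) : 'cV[R]_n := (oneT^T *m invmx (toep s))^T.

Definition ebasis (k : 'I_n) : 'cV[R]_n := delta_mx k 0.

Definition eball (c : 'cV[R]_n) (r : R) : set 'cV[R]_n :=
  [set x | \sum_i (x i 0 - c i 0) ^+ 2 < r ^+ 2].

(* coefficient of dx_j in the 1-form (s^{-1})^T L ds *)
Definition form_coef (L : 'M[R]_n) (j : 'I_n) (s : 'cV[R]_n) : R :=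
  \sum_i tinv s i 0 * L i j.

Definition pderiv (f : 'cV[R]_n -> R) (k : 'I_n) (s : 'cV[R]_n) : R :=
  derive1 (fun h : R => f (s + h *: ebasis k)) 0.

Definition has_pderiv (f : 'cV[R]_n -> R) (k : 'I_n) (s : 'cV[R]_n) : Prop :=
  derivable (fun h : R => f (s + h *: ebasis k)) 0 1.

(* L is an uncurling metric on the ball B(1, r): L real symmetric and
   d((s^{-1})^T L ds) = 0 on the ball, i.e. for all j k, the coefficient
   functions have partial derivatives and d_k f_j = d_j f_k. *)
Definition uncurling_on (r : R) (L : 'M[R]_n) : Prop :=
  L^T = L /\
  forall s, eball oneT r s -> forall j k : 'I_n,
    has_pderiv (form_coef L j) k s /\
    pderiv (form_coef L j) k s = pderiv (form_coef L k) j s.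

End TToep.
Arguments oneT {R n}.
Arguments exch {R n}.

(* Main.v *)
Require Import Defs.
From HB Require Import structures.
From mathcomp Require Import all_boot all_order all_algebra.
From mathcomp Require Import all_classical all_reals all_analysis.
From mathcomp Require Import zify ring lra.
Set Implicit Arguments. Unset Strict Implicit. Unset Printing Implicit Defensive.
Import Order.TTheory GRing.Theory Num.Theory.
Local Open Scope ring_scope.


Section Der.
Variable R : realType.

Lemma isd_sum (I : Type) (r : seq I) (P : pred I) (g : I -> R -> R) (dg : I -> R) :
  (forall i, is_derive (0:R) 1 (g i) (dg i)) ->
  is_derive (0:R) 1 (fun h => \sum_(i <- r | P i) g i h) (\sum_(i <- r | P i) dg i).
Proof.
move=> H; rewrite -fct_sumE.
elim: r => [|a r IH]; first by rewrite !big_nil; exact: is_derive_cst.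
rewrite !big_cons; case: (P a) => //.
exact: is_deriveD.
Qed.

Lemma isd_prod (I : Type) (r : seq I) (P : pred I) (g : I -> R -> R) :
  (forall i, derivable (g i) 0 1) ->
  derivable (fun h => \prod_(i <- r | P i) g i h) (0:R) 1.
Proof.
move=> H; rewrite -fct_prodE.
elim: r => [|a r IH]; first by rewrite !big_nil; exact: derivable_cst.
rewrite !big_cons; case: (P a) => //.
exact: derivableM.
Qed.

Lemma isd_mul (f g : R -> R) df dg : is_derive (0:R) 1 f df -> is_derive (0:R) 1 g dg ->
  is_derive (0:R) 1 (fun h => f h * g h) (f 0 * dg + df * g 0).
Proof.
move=> H1 H2; have := is_deriveM H1 H2.
rewrite -/(f * g).
move=> H; apply: is_derive_eq H _.
by congr (_ + _) => //; exact: mulrC.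
Qed.

Definition mxdv m p (F : R -> 'M[R]_(m,p)) := forall i j, derivable (fun h => F h i j) (0:R) 1.

Lemma dv_isd (f : R -> R) : derivable f 0 1 -> is_derive (0:R) 1 f ('D_1 f 0).
Proof. exact: derivableP. Qed.

Lemma dv_sum (I : Type) (r : seq I) (P : pred I) (g : I -> R -> R) :
  (forall i, derivable (g i) 0 1) ->
  derivable (fun h => \sum_(i <- r | P i) g i h) (0:R) 1.
Proof.
by move=> H; case: (isd_sum r P (fun i => dv_isd (H i))).
Qed.

Lemma mxdv_det m (F : R -> 'M[R]_m) : mxdv F -> derivable (fun h => \det (F h)) 0 1.
Proof.
move=> H; apply: dv_sum => s.
apply: derivableM; first exact: derivable_cst.
by apply: isd_prod => i; apply: H.
Qed.

Lemma mxdv_adj m (F : R -> 'M[R]_m) : mxdv F -> mxdv (fun h => \adj (F h)).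
Proof.
move=> H i j.
have -> : (fun h => \adj (F h) i j) = fun h => (-1) ^+ (j + i) * \det (row' j (col' i (F h))).
  by apply/funext => h; rewrite mxE /cofactor.
apply: derivableM; first exact: derivable_cst.
apply: mxdv_det => a b.
have -> : (fun h => row' j (col' i (F h)) a b) = fun h => F h (lift j a) (lift i b).
  by apply/funext => h; rewrite !mxE.
exact: H.
Qed.

Lemma mxdv_scale m p (c : R -> R) (F : R -> 'M[R]_(m,p)) :
  derivable c 0 1 -> mxdv F -> mxdv (fun h => c h *: F h).
Proof.
move=> Hc H i j.
have -> : (fun h => (c h *: F h) i j) = fun h => c h * F h i j.
  by apply/funext => h; rewrite !mxE.
exact: derivableM.
Qed.

Definition mxd m p (F : R -> 'M[R]_(m,p)) (D : 'M[R]_(m,p)) :=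
  forall i j, is_derive (0:R) 1 (fun h => F h i j) (D i j).

Lemma mxdv_mxd m p (F : R -> 'M[R]_(m,p)) : mxdv F ->
  mxd F (\matrix_(i, j) 'D_1 (fun h => F h i j) 0).
Proof. by move=> H i j; rewrite mxE; apply: dv_isd. Qed.

Lemma mxd_mul m p q (F : R -> 'M[R]_(m,p)) (G : R -> 'M[R]_(p,q)) DF DG :
  mxd F DF -> mxd G DG -> mxd (fun h => F h *m G h) (F 0 *m DG + DF *m G 0).
Proof.
move=> HF HG i j.
have -> : (fun h => (F h *m G h) i j) = fun h => \sum_l (F h i l * G h l j).
  by apply/funext => h; rewrite !mxE.
rewrite !mxE -big_split /=.
apply: isd_sum => l.
exact: isd_mul (HF i l) (HG l j).
Qed.

Lemma mxd_cst m p (C : 'M[R]_(m,p)) : mxd (fun _ => C) 0.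
Proof. by move=> i j; rewrite mxE; exact: is_derive_cst. Qed.

Lemma mxd_aff m p (C E : 'M[R]_(m,p)) : mxd (fun h => C + h *: E) E.
Proof.
move=> i j.
have -> : (fun h : R => (C + h *: E) i j) = fun h => C i j + h * E i j.
  by apply/funext => h; rewrite !mxE.
have H := is_deriveD (is_derive_cst (C i j) (0:R) (1:R))
  (isd_mul (is_derive_id (0:R) (1:R)) (is_derive_cst (E i j) (0:R) (1:R))).
apply: is_derive_eq H _.
by rewrite /= mul0r mul1r !add0r.
Qed.

Lemma mxd_unique m p (F : R -> 'M[R]_(m,p)) D1 D2 : mxd F D1 -> mxd F D2 -> D1 = D2.
Proof.
move=> H1 H2; apply/matrixP => i j.
have E1 := @derive_val _ _ _ _ _ _ _ (H1 i j).
have E2 := @derive_val _ _ _ _ _ _ _ (H2 i j).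
by rewrite -E1 -E2.
Qed.

Lemma mxd_near m p (F G : R -> 'M[R]_(m,p)) D :
  (\forall h \near (0:R^o), F h = G h) -> mxd F D -> mxd G D.
Proof.
move=> HN H i j; apply: near_eq_is_derive (H i j).
by near=> h; rewrite (near HN h).
Unshelve. all: by end_near.
Qed.

Lemma inv_deriv N (A0 E : 'M[R]_N) : A0 \in unitmx ->
  exists P : R -> 'M[R]_N,
   (\forall h \near (0:R^o), invmx (A0 + h *: E) = P h) /\
   mxd P (- (invmx A0 *m E *m invmx A0)).
Proof.
move=> uA.
pose A := fun h : R => A0 + h *: E.
have A00 : A 0 = A0 by rewrite /A scale0r addr0.
have dA : mxdv A by move=> i j; case: (mxd_aff A0 E i j).
have ddet := mxdv_det dA.
have det0 : \det (A 0) != 0 by rewrite A00 -unitfE -unitmxE.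
have nearu : \forall h \near (0:R^o), \det (A h) != 0.
  have cont : ((fun h => \det (A h)) @ (0:R^o) --> (\det (A 0) : R^o))%classic.
    have dd : differentiable (fun h => \det (A h)) (0:R^o) by apply/derivable1_diffP.
    exact: (differentiable_continuous dd).
  exact: (cvgr_neq0 _ cont det0).
pose P := fun h => (\det (A h))^-1 *: \adj (A h).
have hP : \forall h \near (0:R^o), invmx (A h) = P h.
  near=> h; rewrite /invmx ifT //.
  by rewrite unitmxE unitfE; apply: (near nearu h).
exists P; split; first exact: hP.
have dP : mxdv P.
  apply: mxdv_scale; last exact: mxdv_adj.
  exact: derivableV.
set P' := \matrix_(i, j) 'D_1 (fun h => P h i j) 0.
have HP : mxd P P' by apply: mxdv_mxd.
have P0 : P 0 = invmx A0 by rewrite /P -A00 /invmx ifT // unitmxE unitfE.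
have H1 := mxd_mul (mxd_aff A0 E) HP.
have H2 : mxd (fun h => A h *m P h) 0.
  apply: (mxd_near _ (mxd_cst 1%:M)).
  near=> h.
  have u : A h \in unitmx by rewrite unitmxE unitfE; exact: (near nearu h).
  rewrite -[P h](near hP h). have e := mulmxV u; symmetry in e; exact e.
  by [].
have := mxd_unique H1 H2.
rewrite -/(A 0) A00 P0 => /eqP; rewrite addr_eq0 => /eqP EQ.
suff <- : P' = - (invmx A0 *m E *m invmx A0) by [].
have -> : P' = invmx A0 *m (A0 *m P') by rewrite mulmxA mulVmx // mul1mx.
by rewrite EQ mulmxN mulmxA.
Unshelve. all: by end_near.
Qed.
End Der.



Section Alg.
Variables (R : realType) (n : nat).
Local Notation N := n.+1.

Definition Sh : 'M[R]_N := \matrix_(i, j) (((j:nat) == (i:nat).+1)%:R).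

Lemma sum_eq_nat (F : 'I_N -> R) (a : nat) :
  \sum_(l < N) (((l:nat) == a)%:R * F l) = if (a < N)%N then F (inord a) else 0.
Proof.
case: ltnP => ha.
  rewrite (bigD1 (inord a)) //= inordK // eqxx mul1r big1 ?addr0 // => l hl.
  have -> : ((l:nat) == a) = false.
    apply/negbTE; apply: contra hl => /eqP e; apply/eqP/val_inj; by rewrite /= inordK.
  by rewrite mul0r.
rewrite big1 // => l _.
have -> : ((l:nat) == a) = false.
  by apply/negbTE; rewrite neq_ltn (leq_trans (ltn_ord l) ha).
by rewrite mul0r.
Qed.

Lemma ShX_E p (i j : 'I_N) : (Sh ^+ p) i j = ((j:nat) == ((i:nat) + p)%N)%:R.
Proof.
elim: p i j => [|p IH] i j.
  rewrite expr0 mxE addn0 eq_sym; congr (_ *+ _); congr nat_of_bool.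
rewrite exprSr -mulmxE mxE.
under eq_bigr do rewrite IH mxE.
rewrite (sum_eq_nat (fun l => (((j:nat) == (l:nat).+1)%:R))).
case: ltnP => h; first by rewrite /= inordK // addnS.
have -> : ((j:nat) == ((i:nat) + p.+1)%N) = false.
  by apply/negbTE; rewrite neq_ltn (leq_trans (ltn_ord j)) // addnS ltnW.
by [].
Qed.

Lemma ShX_big q : (N <= q)%N -> Sh ^+ q = 0.
Proof.
move=> hq; apply/matrixP => i j; rewrite ShX_E mxE.
have -> : ((j:nat) == ((i:nat) + q)%N) = false by apply/negbTE; rewrite neq_ltn; move: (ltn_ord i) (ltn_ord j) => /= ? ?; lia.
by [].
Qed.

Lemma toep_entry (v : 'cV[R]_N) (i j : 'I_N) :
  toep v i j = if (i <= j)%N then v (inord (j - i)) 0 else 0.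
Proof.
rewrite mxE; case: leqP => // h.
rewrite (big_pred1 (inord (j - i))) // => k /=.
apply/idP/eqP => [/eqP e|->]; first by apply/val_inj; rewrite /= inordK ?e //; move: (ltn_ord i) (ltn_ord j) => /= ? ?; lia.
by rewrite inordK //; move: (ltn_ord i) (ltn_ord j) => /= ? ?; lia.
Qed.

Lemma toep_e k : toep (ebasis R k) = Sh ^+ k.
Proof.
apply/matrixP => i j; rewrite toep_entry ShX_E /ebasis mxE.
case: leqP => h.
  rewrite andbT; congr (_ *+ _); congr nat_of_bool.
  apply/eqP/eqP => [e|e]; first by have := congr1 val e; rewrite /= inordK; move: (ltn_ord i) (ltn_ord j) => /= ? ?; lia.
  apply/val_inj; rewrite /= inordK; move: (ltn_ord i) (ltn_ord j) => /= ? ?; lia.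
have -> : ((j:nat) == ((i:nat) + k)%N) = false by apply/negbTE; rewrite neq_ltn; move: (ltn_ord i) (ltn_ord j) => /= ? ?; lia.
by [].
Qed.

Lemma toep_lin (a b : 'cV[R]_N) c : toep (a + c *: b) = toep a + c *: toep b.
Proof.
apply/matrixP => i j.
have -> : (toep a + c *: toep b) i j = toep a i j + c * toep b i j by rewrite !mxE.
rewrite !toep_entry.
by case: leqP => _; rewrite ?mxE ?mulr0 ?addr0.
Qed.

Lemma oneT_e : oneT = ebasis R (ord0 : 'I_N).
Proof.
apply/matrixP => i j; rewrite !mxE (ord1 j) eqxx andbT.
by case: i => -[|i] hi.
Qed.

Lemma toep_one : toep (oneT : 'cV[R]_N) = 1%:M.
Proof. by rewrite oneT_e toep_e expr0. Qed.


Lemma toepE (v : 'cV[R]_N) : toep v = \sum_(p < N) v p 0 *: Sh ^+ p.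
Proof.
apply/matrixP => i j; rewrite toep_entry summxE.
under eq_bigr do rewrite mxE ShX_E.
case: leqP => h.
  have E : forall p : 'I_N, v p 0 * ((j:nat) == (i + p)%N)%:R = ((p:nat) == (j - i)%N)%:R * v p 0.
    move=> p; rewrite mulrC; congr (_ *+ _ * _); congr nat_of_bool; apply/eqP/eqP; lia.
  rewrite (eq_bigr _ (fun p _ => E p)).
  by rewrite sum_eq_nat ifT //; move: (ltn_ord j); lia.
rewrite big1 // => p _.
have -> : ((j:nat) == (i + p)%N) = false by apply/negbTE; rewrite neq_ltn; lia.
by rewrite mulr0.
Qed.

Definition comS (M : 'M[R]_N) := Sh *m M = M *m Sh.

Lemma comS_comm (M : 'M[R]_N) (v : 'cV[R]_N) : comS M -> M *m toep v = toep v *m M.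
Proof.
move=> H; rewrite toepE mulmx_sumr mulmx_suml; apply: eq_bigr => p _.
rewrite -!scalemxAr -scalemxAl; congr (_ *: _).
have : GRing.comm M (Sh ^+ p) by apply: commrX; rewrite /GRing.comm -!mulmxE H.
by rewrite /GRing.comm -!mulmxE.
Qed.

Lemma comS_toep (v : 'cV[R]_N) : comS (toep v).
Proof.
by apply: comS_comm.
Qed.

Lemma ShM_E (M : 'M[R]_N) (i j : 'I_N) :
  (Sh *m M) i j = if (i.+1 < N)%N then M (inord i.+1) j else 0.
Proof.
rewrite mxE; under eq_bigr do rewrite mxE.
by rewrite (sum_eq_nat (fun l => M l j)).
Qed.

Lemma MSh_E (M : 'M[R]_N) (i j : 'I_N) :
  (M *m Sh) i j = if (j:nat) is j'.+1 then M i (inord j') else 0.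
Proof.
rewrite mxE; under eq_bigr do rewrite mxE.
case: j => -[|j'] hj /=.
  by rewrite big1 // => l _; rewrite mulr0.
under eq_bigr do rewrite mulrC eqSS.
under eq_bigr do rewrite eq_sym.
by rewrite (sum_eq_nat (fun l => M i l)) ifT //; lia.
Qed.

Lemma comS_toepE (M : 'M[R]_N) : comS M -> M = toep (\col_j M ord0 j).
Proof.
move=> H.
suff K : forall k (i : 'I_N), (i:nat) = k -> forall j : 'I_N,
    M i j = if (i <= j)%N then M ord0 (inord (j - i)) else 0.
  by apply/matrixP => i j; rewrite toep_entry mxE (K i) //.
elim=> [|k IH] i hi j.
  rewrite hi subn0 leq0n; congr (M _ _); apply/val_inj => //=; rewrite inordK //.
have hk : (k < N)%N by move: (ltn_ord i); lia.
have hk1 : (k.+1 < N)%N by move: (ltn_ord i); lia.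
pose i' : 'I_N := inord k.
have hi' : (i':nat) = k by rewrite /i' inordK.
have -> : i = inord (i'.+1) by apply/val_inj; rewrite /= hi' inordK // hi.
have := ShM_E M i' j; rewrite hi' hk1 H MSh_E => <-.
rewrite inordK //.
case: j => -[|j'] hj /=; first by [].
rewrite (IH i') // inordK; last by lia.
by rewrite hi' subSS.
Qed.

Lemma comS_mul (A B : 'M[R]_N) : comS A -> comS B -> comS (A *m B).
Proof. by rewrite /comS => HA HB; rewrite mulmxA HA -!mulmxA HB. Qed.

Lemma comS_add (A B : 'M[R]_N) : comS A -> comS B -> comS (A + B).
Proof. by rewrite /comS => HA HB; rewrite mulmxDl mulmxDr HA HB. Qed.

Lemma comS_scale c (A : 'M[R]_N) : comS A -> comS (c *: A).
Proof. by rewrite /comS => HA; rewrite -scalemxAl -scalemxAr HA. Qed.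

Lemma comS_inv (A : 'M[R]_N) : A \in unitmx -> comS A -> comS (invmx A).
Proof.
rewrite /comS => uA HA.
have e : Sh = invmx A *m Sh *m A by rewrite -mulmxA HA mulmxA mulVmx // mul1mx.
by rewrite {1}e -!mulmxA mulmxV // mulmx1.
Qed.

Lemma comS_comm2 (A B : 'M[R]_N) : comS A -> comS B -> A *m B = B *m A.
Proof. by move=> HA HB; rewrite (comS_toepE HB) comS_comm. Qed.

Lemma comS_ShX (A : 'M[R]_N) k : comS A -> A *m Sh ^+ k = Sh ^+ k *m A.
Proof.
move=> HA; have : GRing.comm A Sh by rewrite /GRing.comm -!mulmxE HA.
by move/(commrX k); rewrite /GRing.comm -!mulmxE.
Qed.

End Alg.



Section Alg2.
Variables (R : realType) (n : nat).
Local Notation N := n.+1.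
Local Notation Sh := (Sh R n).
Local Notation X := (@exch R N).

Lemma exchM_E (M : 'M[R]_N) (i j : 'I_N) : (X *m M) i j = M (rev_ord i) j.
Proof.
rewrite mxE.
have E : forall l : 'I_N, X i l * M l j = ((l:nat) == (n - i)%N)%:R * M l j.
  move=> l; rewrite mxE; move: (ltn_ord i) (ltn_ord l) => /= ? ?.
  by case: eqP => /= e; case: eqP => /= e'; rewrite ?mul1r ?mul0r //; exfalso; lia.
rewrite (eq_bigr _ (fun l _ => E l)) sum_eq_nat ifT; last by lia.
by congr (M _ _); apply/val_inj; rewrite /= inordK; lia.
Qed.

Lemma MexchE (M : 'M[R]_N) (i j : 'I_N) : (M *m X) i j = M i (rev_ord j).
Proof.
rewrite mxE.
have E : forall l : 'I_N, M i l * X l j = ((l:nat) == (n - j)%N)%:R * M i l.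
  move=> l; rewrite mxE mulrC; move: (ltn_ord j) (ltn_ord l) => /= ? ?.
  by case: eqP => /= e; case: eqP => /= e'; rewrite ?mul1r ?mul0r //; exfalso; lia.
rewrite (eq_bigr _ (fun l _ => E l)) (sum_eq_nat (fun l => M i l)) ifT; last by lia.
by congr (M _ _); apply/val_inj; rewrite /= inordK; lia.
Qed.

Lemma exchK : X *m X = 1%:M.
Proof.
apply/matrixP => i j; rewrite exchM_E !mxE; move: (ltn_ord i) (ltn_ord j) => /= ? ?.
case: eqP => /= e; case: eqP => /= e' //; first by case: e'; apply/val_inj => /=; lia.
by rewrite e' in e; exfalso; lia.
Qed.

Lemma exch_tr : X^T = X.
Proof. by apply/matrixP => i j; rewrite !mxE /= addnC. Qed.

Lemma toep_tr (v : 'cV[R]_N) : (toep v)^T = X *m toep v *m X.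
Proof.
apply/matrixP => i j; rewrite MexchE exchM_E mxE !toep_entry /=.
move: (ltn_ord i) (ltn_ord j) => hi hj.
have -> : (n - i <= n - j)%N = (j <= i)%N by apply/idP/idP; lia.
case: leqP => // _; congr (v _ _); apply/val_inj; rewrite /= !inordK; lia.
Qed.

Definition symm (M : 'M[R]_N) := M^T = M.

Lemma symm_toepX (t : 'cV[R]_N) : symm (toep t *m X).
Proof. by rewrite /symm trmx_mul exch_tr toep_tr !mulmxA exchK mul1mx. Qed.

Lemma symm_comS (W : 'M[R]_N) (t : 'cV[R]_N) : comS W -> symm (W *m (toep t *m X)).
Proof.
move=> HW; rewrite (comS_toepE HW) /symm !trmx_mul exch_tr !toep_tr.
rewrite !mulmxA exchK mul1mx -(mulmxA _ X X) exchK mulmx1.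
by rewrite (comS_comm _ (comS_toep t)).
Qed.

End Alg2.



Section Alg3.
Variables (R : realType) (n : nat).
Local Notation N := n.+1.
Local Notation Sh := (Sh R n).
Local Notation X := (@exch R N).
Local Notation symm := (@symm R n).

Lemma symmP (A : 'M[R]_N) : symm A <-> forall i j, A i j = A j i.
Proof.
split => [H i j|H]; first by rewrite -[in LHS]H mxE.
by apply/matrixP => i j; rewrite mxE H.
Qed.

Lemma symm_add (A B : 'M[R]_N) : symm A -> symm B -> symm (A + B).
Proof. by move=> /symmP HA /symmP HB; apply/symmP => i j; rewrite !mxE HA HB. Qed.

Lemma symm_scale c (A : 'M[R]_N) : symm A -> symm (c *: A).
Proof. by move=> /symmP HA; apply/symmP => i j; rewrite !mxE HA. Qed.

Lemma symm_opp (A : 'M[R]_N) : symm A -> symm (- A).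
Proof. by move=> /symmP HA; apply/symmP => i j; rewrite !mxE HA. Qed.

Lemma symm_sum (I : finType) (F : I -> 'M[R]_N) : (forall i, symm (F i)) -> symm (\sum_i F i).
Proof.
move=> H; apply/symmP => a b; rewrite !summxE; apply: eq_bigr => i _.
by have /symmP := H i; apply.
Qed.

Lemma ShXM_E (M : 'M[R]_N) p (a b : 'I_N) :
  (Sh ^+ p *m M) a b = if (a + p < N)%N then M (inord (a + p)) b else 0.
Proof.
rewrite mxE; under eq_bigr do rewrite ShX_E.
by rewrite (sum_eq_nat (fun l => M l b)).
Qed.

Lemma hankel (L : 'M[R]_N) : symm L -> (forall p : 'I_N, symm (Sh ^+ p *m L)) ->
  L = toep (\col_p L (rev_ord p) ord0) *m X.
Proof.
move=> /symmP sL sS; apply/matrixP => i j.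
rewrite MexchE toep_entry mxE.
have K : (Sh ^+ j *m L) ord0 i = (Sh ^+ j *m L) i ord0.
  by have /symmP := sS j; apply.
rewrite !ShXM_E /= add0n ifT // in K.
move: (ltn_ord i) (ltn_ord j) => hi hj.
have Ej : inord j = j by apply/val_inj; rewrite /= inordK.
rewrite Ej -sL in K.
rewrite K /=.
have -> : (i <= n - j)%N = (i + j < N)%N by apply/idP/idP; lia.
case: ifP => // h; congr (L _ _); apply/val_inj; rewrite /= !inordK; lia.
Qed.

Lemma symSY (L : 'M[R]_N) m : (forall q, (m < q)%N -> symm (Sh ^+ q *m L)) ->
  forall Y, comS Y -> forall q, (m < q)%N -> symm (Sh ^+ q *m Y *m L).
Proof.
move=> IH Y HY q hq.
rewrite (comS_toepE HY) toepE mulmx_sumr mulmx_suml.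
apply: symm_sum => p.
rewrite -scalemxAr -scalemxAl; apply: symm_scale.
have -> : Sh ^+ q *m Sh ^+ p = Sh ^+ (q + p) by rewrite exprD.
case: (ltnP (q + p) N) => h; first by apply: IH; lia.
by rewrite ShX_big // mul0mx; apply/symmP => i j; rewrite !mxE.
Qed.

Lemma zid (a u x o : 'M[R]_N) :
  x = o - a *+ 2 + ((a - (o - u)) *+ 2 + (o - u - (u - x))).
Proof. apply/matrixP => i j; rewrite !mulr2n !mxE; lra. Qed.

Lemma sq_id (a u : 'M[R]_N) : a * u = 1 - u ->
  u * u = 1 - a *+ 2 + a * a * (u *+ 2 + u * u).
Proof.
move=> Hau.
have h1 : a * a * u = a - (1 - u) by rewrite -mulrA Hau mulrBr mulr1 Hau.
have h2 : a * a * (u * u) = 1 - u - (u - u * u).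
  by rewrite mulrA h1 mulrBl Hau mulrBl mul1r.
rewrite mulrDr mulrnAr h1 h2; exact: zid.
Qed.


Lemma symm_sub (A B : 'M[R]_N) : symm (A + B) -> symm B -> symm A.
Proof. by move=> H1 H2; rewrite -(addrK B A); apply: symm_add => //; apply: symm_opp. Qed.

Lemma comS_1 : comS (1%:M : 'M[R]_N).
Proof. by rewrite /comS mulmx1 mul1mx. Qed.

Lemma comS_ShXk k : comS (Sh ^+ k).
Proof. by rewrite /comS (comS_ShX k (erefl _)). Qed.

Lemma conv_step (L : 'M[R]_N) m eps : symm L -> (0 < m)%N -> eps != 0 ->
  (1%:M + eps *: Sh ^+ m) \in unitmx ->
  symm (invmx (1%:M + eps *: Sh ^+ m) *m invmx (1%:M + eps *: Sh ^+ m) *m L) ->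
  (forall q, (m < q)%N -> symm (Sh ^+ q *m L)) -> symm (Sh ^+ m *m L).
Proof.
move=> sL hm he uT HW IH.
set T := 1%:M + _ in uT HW. set U := invmx T in HW.
set a := eps *: Sh ^+ m.
have Hau : a * U = 1 - U.
  have e : T *m U = 1%:M by rewrite mulmxV.
  rewrite /T mulmxDl mul1mx in e.
  have e' : a *m U = 1%:M - U by rewrite -e addrAC subrr add0r.
  exact: e'.
have HU := sq_id Hau.
have cT : comS T by apply: comS_add; [exact: comS_1 | apply: comS_scale; exact: comS_ShXk].
have cU : comS U by apply: comS_inv.
set Y := U *+ 2 + U * U in HU.
have cY : comS Y by rewrite /Y mulr2n; apply: comS_add; [apply: comS_add|apply: comS_mul].
have sY : symm (a * a * Y *m L).
  have -> : a * a * Y *m L = (eps * eps) *: (Sh ^+ (m + m) *m Y *m L).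
    by rewrite /a exprD -scalerAl -scalerAr scalerA -scalerAl -scalemxAl.
  apply: symm_scale; apply: (symSY IH) => //; lia.
have e2 : U *m U *m L = (1 - a *+ 2) *m L + a * a * Y *m L.
  by rewrite -mulmxDl -HU.
rewrite e2 in HW.
have s1 := symm_sub HW sY.
have e3 : (1 - a *+ 2) *m L = L + (- (eps *+ 2)) *: (Sh ^+ m *m L).
  by rewrite mulmxBl mul1mx /a scaleNr scalemxAl scalerMnl.
rewrite e3 addrC in s1.
have s2 := symm_scale (- (eps *+ 2))^-1 (symm_sub s1 sL).
rewrite scalerA mulVf ?scale1r // in s2.
by rewrite oppr_eq0 mulrn_eq0 negb_or he.
Qed.

End Alg3.



Section Main.
Variables (R : realType) (n : nat).
Local Notation N := n.+1.
Local Notation Sh := (Sh R n).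
Local Notation X := (@exch R N).
Local Notation symm := (@symm R n).

Lemma form_coefE (L : 'M[R]_N) j (v : 'cV[R]_N) :
  form_coef L j v = (invmx (toep v) *m L) ord0 j.
Proof.
rewrite /form_coef [RHS]mxE; apply: eq_bigr => i _; congr (_ * _).
rewrite /tinv [LHS]mxE [LHS]mxE (bigD1 ord0) //= big1 ?addr0.
  by rewrite !mxE /= mul1r.
by move=> l hl; rewrite !mxE ifF ?mul0r //; apply/negbTE; apply: contra hl => /eqP h; apply/eqP/val_inj.
Qed.

Lemma pder (L : 'M[R]_N) (s : 'cV[R]_N) j k : toep s \in unitmx ->
  has_pderiv (form_coef L j) k s /\
  pderiv (form_coef L j) k s = - (invmx (toep s) *m Sh ^+ k *m invmx (toep s) *m L) ord0 j.
Proof.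
move=> u.
have [P [hP dP]] := inv_deriv (Sh ^+ k) u.
have dF := mxd_mul dP (mxd_cst L) ord0 j.
have isd : is_derive (0:R) 1 (fun h : R => form_coef L j (s + h *: ebasis R k))
   ((P 0 *m 0 + (- (invmx (toep s) *m Sh ^+ k *m invmx (toep s))) *m L) ord0 j).
  apply: near_eq_is_derive dF.
  near=> h; rewrite form_coefE toep_lin toep_e.
  by rewrite (near hP h).
split; first by case: isd.
rewrite /pderiv derive1E (@derive_val _ _ _ _ _ _ _ isd).
by rewrite mulmx0 add0r mulNmx [LHS]mxE.
Unshelve. all: by end_near.
Qed.


Lemma unitT_unit (s : 'cV[R]_N) : unitT s -> toep s \in unitmx.
Proof. by case=> u [h _]; case: (mulmx1_unit h). Qed.

Lemma pd_sym_entry (U L : 'M[R]_N) (k j : 'I_N) : comS U ->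
  (U *m Sh ^+ k *m U *m L) ord0 j = (U *m U *m L) k j.
Proof.
move=> cU; rewrite (comS_ShX k cU) -!mulmxA ShXM_E add0n ifT //.
by rewrite !mulmxA; congr (_ _ _); apply/val_inj; rewrite /= inordK.
Qed.

Lemma ball_pt (r eps : R) (m : 'I_N) : 0 < r -> eps = r / 2 ->
  eball oneT r (oneT + eps *: ebasis R m).
Proof.
move=> hr he; rewrite /eball /=.
rewrite (bigD1 m) //= big1 ?addr0.
  rewrite !mxE eqxx /= addrAC subrr add0r mulr1 he; nra.
move=> i hi; rewrite !mxE addrAC subrr add0r (negbTE hi) /= mulr0.
by rewrite expr2 mulr0.
Qed.

Lemma main_fwd (r : R) (hball : forall s : 'cV[R]_N, eball oneT r s -> unitT s)
  (t : 'cV[R]_N) : uncurling_on r (toep t *m X).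
Proof.
split; first exact: symm_toepX.
move=> s hs j k; have u := unitT_unit (hball s hs).
have [d1 e1] := pder (toep t *m X) j k u.
have [_ e2] := pder (toep t *m X) k j u.
split => //; rewrite e1 e2; congr (- _).
have cU : comS (invmx (toep s)) := comS_inv u (comS_toep s).
rewrite !pd_sym_entry //.
have /symmP := symm_comS t (comS_mul cU cU).
by rewrite mulmxA; apply.
Qed.

Lemma main_bwd (r : R) (hr : 0 < r) (hball : forall s : 'cV[R]_N, eball oneT r s -> unitT s)
  (L : 'M[R]_N) : uncurling_on r L -> exists t : 'cV[R]_N, L = toep t *m X.
Proof.
move=> [sL H].
have HS : forall s, eball oneT r s -> symm (invmx (toep s) *m invmx (toep s) *m L).
  move=> s hs; have u := unitT_unit (hball s hs).
  have cU : comS (invmx (toep s)) := comS_inv u (comS_toep s).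
  apply/symmP => a b.
  have [_ e1] := pder L b a u; have [_ e2] := pder L a b u.
  have := (H s hs b a).2; rewrite e1 e2 => /oppr_inj.
  by rewrite !pd_sym_entry.
have K : forall d q, (N - d <= q)%N -> symm (Sh ^+ q *m L).
  elim=> [|d IH] q hq.
    by rewrite subn0 in hq; rewrite ShX_big // mul0mx; apply/symmP => i j; rewrite !mxE.
  case: (leqP (N - d) q) => hq'; first exact: IH.
  have eq : q = (N - d.+1)%N by lia.
  case: q hq hq' eq => [|q] hq hq' eq.
    by rewrite expr0 mul1mx.
  have hqN : (q.+1 < N)%N by lia.
  pose m : 'I_N := inord q.+1.
  have hm : (m : nat) = q.+1 by rewrite inordK.
  have hb := ball_pt m hr (erefl (r / 2)).
  have ht : toep (oneT + (r / 2) *: ebasis R m) = 1%:M + (r / 2) *: Sh ^+ q.+1.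
    by rewrite toep_lin toep_one toep_e hm.
  have u := unitT_unit (hball _ hb).
  rewrite ht in u.
  have := HS _ hb; rewrite ht => HW.
  apply: (conv_step sL _ _ u HW) => //.
    by rewrite mulf_neq0 ?invr_neq0 ?gt_eqF // ltr0n.
  by move=> q' hq'2; apply: IH; lia.
have Q : forall p : 'I_N, symm (Sh ^+ p *m L) by move=> p; apply: (K N p); rewrite subnn.
by exists (\col_p L (rev_ord p) ord0); apply: hankel.
Qed.

End Main.


Theorem theorem10p4 (R : realType) (n : nat) (r : R) (hr : 0 < r)
  (hball : forall s : 'cV[R]_n, eball oneT r s -> unitT s) :
  (forall t : 'cV[R]_n, uncurling_on r (toep t *m exch)) /\
  (forall L : 'M[R]_n, uncurling_on r L ->
     exists t : 'cV[R]_n, L = toep t *m exch).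
Proof.
case: n hball => [|n'] hball.
  split.
    move=> t; split; first by apply/matrixP => -[].
    by move=> s _ [].
  by move=> L _; exists 0; apply/matrixP => -[].
split; [exact: main_fwd | exact: main_bwd].
Qed.
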